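(* Let $\varepsilon>0$ and let $(X,d)$ be a compact length space with closed measurement set $S\subset X$ such that $\mathcal R_{X,S}$ is a topological embedding. The following are equivalent: (1) $(X,d)$ with $S$ is $\mathrm{BLIE}_\varepsilon$; (2) $(X,d)$ with $S$ is $\mathrm{FLIE}_\varepsilon$ and $(\mathcal R_{X,S}(X),\|\cdot\|_\infty)$ satisfies the $\varepsilon$-local midpoint property; (3) $(X,d)$ with $S$ is $\mathrm{FLIE}_{\varepsilon_0}$ for some $\varepsilon_0\in(0,\varepsilon)$ and $(\mathcal R_{X,S}(X),\|\cdot\|_\infty)$ satisfies the $\varepsilon$-local midpoint property.
   Context: $\mathcal R_{X,S}\colon(X,d)\to(C(S),\|\cdot\|_\infty)$, $\mathcal R_{X,S}(p)(z)=d(p,z)$. A continuous map is an $\varepsilon$-local isometry if it preserves distances between points at distance $<\varepsilon$. $\mathrm{FLIE}_\varepsilon$: $\mathcal R_{X,S}$ is a topological embedding and an $\varepsilon$-local isometry. $\mathrm{BLIE}_\varepsilon$: $\mathcal R_{X,S}$ is a topological embedding and $\mathcal R_{X,S}^{-1}\colon(\mathcal R_{X,S}(X),\|\cdot\|_\infty)\to(X,d)$ is an $\varepsilon$-local isometry. A metric space $(Y,\rho)$ satisfies the $\varepsilon$-local midpoint property if for all $x,y\in Y$ with $\rho(x,y)<\varepsilon$ there is $m\in Y$ with $\rho(m,x)=\rho(m,y)=\tfrac12\rho(x,y)$. *)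

(* Defs.v *)
From Stdlib Require Import Reals Lra List Sorted.
From Coquelicot Require Import Coquelicot.
Open Scope R_scope.

Section Defs.
Context {X : Type} (d : X -> X -> R).

Definition is_metric : Prop :=
  (forall x y, 0 <= d x y) /\
  (forall x y, d x y = 0 <-> x = y) /\
  (forall x y, d x y = d y x) /\
  (forall x y z, d x z <= d x y + d y z).

Definition d_open (U : X -> Prop) : Prop :=
  forall x, U x -> exists r, 0 < r /\ forall y, d x y < r -> U y.

Definition d_closed (S : X -> Prop) : Prop := d_open (fun x => ~ S x).

Definition d_compact : Prop :=
  forall (I : Type) (U : I -> X -> Prop),
    (forall i, d_open (U i)) -> (forall x, exists i, U i x) ->
    exists l : list I, forall x, exists i, In i l /\ U i x.

(* continuous curves [0,1] -> X (a curve is any g : R -> X, only its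
   restriction to [0,1] matters) *)
Definition curve_continuous (g : R -> X) : Prop :=
  forall t, 0 <= t <= 1 -> forall e, 0 < e -> exists del, 0 < del /\
    forall s, 0 <= s <= 1 -> Rabs (s - t) < del -> d (g s) (g t) < e.

Definition is_path (g : R -> X) (x y : X) : Prop :=
  curve_continuous g /\ g 0 = x /\ g 1 = y.

Definition is_partition (l : list R) : Prop :=
  Sorted Rle l /\ hd 1 l = 0 /\ last l 0 = 1.

Fixpoint poly_sum (g : R -> X) (l : list R) : R :=
  match l with
  | t :: ((s :: _) as l') => d (g t) (g s) + poly_sum g l'
  | _ => 0
  end.

Definition curve_length (g : R -> X) : Rbar :=
  Lub_Rbar (fun s => exists l, is_partition l /\ s = poly_sum g l).

Definition length_space : Prop :=
  forall x y, Rbar_is_glb (fun L => exists g, is_path g x y /\ L = curve_length g)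
                          (Finite (d x y)).

Variable S : X -> Prop.

(* R_{X,S}(p) = d(p, .) restricted to S, as an element of C(S) *)
Definition RXS (p : X) : X -> R := fun z => d p z.

(* sup-norm distance in C(S) (sup over the empty set taken as 0) *)
Definition sup_dist (f g : X -> R) : R :=
  real (Lub_Rbar (fun t => exists z, S z /\ t = Rabs (f z - g z))).

Definition rdist (p q : X) : R := sup_dist (RXS p) (RXS q).

(* R_{X,S} is a topological embedding: continuous, injective (as maps into
   C(S), i.e. up to equality on S) and with continuous inverse on its image *)
Definition R_embedding : Prop :=
  (forall p e, 0 < e -> exists del, 0 < del /\
     forall q, d p q < del -> rdist p q < e) /\
  (forall p q, (forall z, S z -> RXS p z = RXS q z) -> p = q) /\
  (forall p e, 0 < e -> exists del, 0 < del /\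
     forall q, rdist p q < del -> d p q < e).

Definition FLIE (eps : R) : Prop :=
  R_embedding /\ forall p q, d p q < eps -> rdist p q = d p q.

(* BLIE_eps: embedding and R_{X,S}^{-1} is an eps-local isometry
   (points of the image are R p, R q and R^{-1}(R p) = p) *)
Definition BLIE (eps : R) : Prop :=
  R_embedding /\ forall p q, rdist p q < eps -> d p q = rdist p q.

Definition image_local_midpoint (eps : R) : Prop :=
  forall p q, rdist p q < eps -> exists m,
    rdist m p = rdist p q / 2 /\ rdist m q = rdist p q / 2.

End Defs.

(* Main.v *)
Require Import Defs.
From Stdlib Require Import Reals Lra List Sorted Classical ZArith Lia.
From Coquelicot Require Import Coquelicot.
Open Scope R_scope.

Section R.
Context {X : Type} (d : X -> X -> R) (S : X -> Prop) (Hm : is_metric d).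

Lemma rev_tri x y z : Rabs (d x z - d y z) <= d x y.
Proof. destruct Hm as (H0 & H1 & H2 & H3).
  pose proof (H3 x y z); pose proof (H3 y x z); rewrite (H2 y x) in *.
  apply Rabs_le; lra. Qed.

Lemma rdist_ub p q z : S z -> Rabs (d p z - d q z) <= rdist d S p q.
Proof. intro Hz. unfold rdist, sup_dist, RXS.
  destruct (Lub_Rbar_correct (fun t => exists z, S z /\ t = Rabs (d p z - d q z))) as [Hu Hl].
  assert (A := Hu _ (ex_intro _ z (conj Hz eq_refl))).
  assert (B : Rbar_le (Lub_Rbar (fun t => exists z, S z /\ t = Rabs (d p z - d q z))) (d p q)).
  { apply Hl. intros t [w [_ ->]]. simpl. apply rev_tri. }
  destruct (Lub_Rbar _); simpl in *; tauto. Qed.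

Lemma rdist_lub p q B : 0 <= B -> (forall z, S z -> Rabs (d p z - d q z) <= B) -> rdist d S p q <= B.
Proof. intros HB H. unfold rdist, sup_dist, RXS.
  destruct (Lub_Rbar_correct (fun t => exists z, S z /\ t = Rabs (d p z - d q z))) as [Hu Hl].
  assert (B0 : Rbar_le (Lub_Rbar (fun t => exists z, S z /\ t = Rabs (d p z - d q z))) B).
  { apply Hl. intros t [w [Hw ->]]. simpl. auto. }
  destruct (Lub_Rbar _); simpl in *; tauto. Qed.

Lemma rdist_nonneg p q : 0 <= rdist d S p q.
Proof. destruct (classic (exists z, S z)) as [[z Hz]|Hn].
  - eapply Rle_trans; [apply Rabs_pos| apply (rdist_ub p q z Hz)].
  - unfold rdist, sup_dist, RXS.
  destruct (Lub_Rbar_correct (fun t => exists z, S z /\ t = Rabs (d p z - d q z))) as [Hu Hl].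
  assert (B0 : Rbar_le (Lub_Rbar (fun t => exists z, S z /\ t = Rabs (d p z - d q z))) m_infty).
  { apply Hl. intros t [w [Hw ->]]. exfalso; eauto. }
  destruct (Lub_Rbar _); simpl in *; try tauto; lra. Qed.

Lemma rdist_le_d p q : rdist d S p q <= d p q.
Proof. apply rdist_lub. apply Hm. intros; apply rev_tri. Qed.

Lemma rdist_sym p q : rdist d S p q = rdist d S q p.
Proof. apply Rle_antisym; apply rdist_lub; try apply rdist_nonneg; intros z Hz;
  rewrite Rabs_minus_sym; apply rdist_ub; auto. Qed.

Lemma rdist_tri p q r : rdist d S p r <= rdist d S p q + rdist d S q r.
Proof. apply rdist_lub. pose proof (rdist_nonneg p q); pose proof (rdist_nonneg q r); lra.
  intros z Hz. pose proof (rdist_ub p q z Hz); pose proof (rdist_ub q r z Hz).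
  replace (d p z - d r z) with ((d p z - d q z) + (d q z - d r z)) by ring.
  eapply Rle_trans; [apply Rabs_triang|lra]. Qed.
End R.
Section K.
Context {X : Type} (d : X -> X -> R) (S : X -> Prop) (Hm : is_metric d)
  (Hc : d_compact d) (He : R_embedding d S).

Lemma unif_inv e0 : 0 < e0 -> exists eta, 0 < eta /\ forall x y, rdist d S x y < eta -> d x y < e0.
Proof. intro He0.
  destruct He as (_ & _ & Hinv).
  set (I := {p : X & {del : R | 0 < del /\ forall q, rdist d S p q < del -> d p q < e0/2}}).
  set (U := fun (i : I) y => rdist d S (projT1 i) y < proj1_sig (projT2 i) / 2).
  destruct (Hc I U) as [l Hl].
  - intros i y Hy. unfold U in *. exists (proj1_sig (projT2 i) / 2 - rdist d S (projT1 i) y).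
    split; [lra|]. intros y' Hy'.
    pose proof (rdist_tri d S Hm (projT1 i) y y'). pose proof (rdist_le_d d S Hm y y'). lra.
  - intro x. destruct (Hinv x (e0/2)) as [del [Hd Hq]]; [lra|].
    exists (existT _ x (exist _ del (conj Hd Hq))). unfold U; simpl.
    replace (rdist d S x x) with 0. lra.
    apply Rle_antisym; [apply rdist_nonneg; auto|]. eapply Rle_trans; [apply rdist_le_d; auto|].
    right; apply Hm; auto.
  - set (eta := fold_right (fun i acc => Rmin (proj1_sig (projT2 i) / 2) acc) 1 l).
    assert (Hpos : 0 < eta).
    { unfold eta; clear Hl; induction l as [|i l IH]; simpl. lra.
      pose proof (proj1 (proj2_sig (projT2 i))). apply Rmin_glb_lt; lra. }
    assert (Hle : forall i, In i l -> eta <= proj1_sig (projT2 i) / 2).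
    { unfold eta; clear Hl Hpos; induction l as [|j l IH]; simpl. tauto.
      intros i [->|Hi]. apply Rmin_l. eapply Rle_trans; [apply Rmin_r| auto]. }
    exists eta; split; auto. intros x y Hxy.
    destruct (Hl x) as [i [Hi Hx]]. unfold U in Hx. specialize (Hle i Hi).
    destruct i as [p [del [Hd Hq]]]; simpl in *.
    pose proof (rdist_tri d S Hm p x y).
    assert (A1 := Hq x ltac:(lra)). assert (A2 := Hq y ltac:(lra)).
    destruct Hm as (_ & _ & Hs & Ht). pose proof (Ht x p y). rewrite (Hs p x) in A1. lra.
Qed.

Lemma pow2_big n : INR n < 2 ^ n.
Proof. induction n. simpl; lra. rewrite S_INR; simpl.
  assert (1 <= 2 ^ n) by (apply pow_R1_Rle; lra). lra. Qed.

Lemma keyK eps e0 : 0 < e0 -> FLIE d S e0 -> image_local_midpoint d S eps -> BLIE d S eps.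
Proof. intros He0 [_ HF] HM. split; auto.
  destruct (unif_inv e0 He0) as [eta [Heta Hu]].
  assert (Ind : forall n x y, rdist d S x y < eps -> rdist d S x y < eta * 2 ^ n -> d x y <= rdist d S x y).
  { induction n; intros x y H1 H2.
    - simpl in H2. right. symmetry. apply HF, Hu. lra.
    - destruct (HM x y H1) as [m [Hmx Hmy]].
      pose proof (rdist_nonneg d S Hm x y).
      assert (A : d x m <= rdist d S x m).
      { apply IHn; rewrite (rdist_sym d S Hm x m), Hmx; simpl in H2; lra. }
      assert (B : d m y <= rdist d S m y).
      { apply IHn; rewrite Hmy; simpl in H2; lra. }
      rewrite (rdist_sym d S Hm x m) in A.
      destruct Hm as (_ & _ & _ & Ht). pose proof (Ht x m y). lra. }
  intros p q Hpq. apply Rle_antisym; [|apply rdist_le_d; auto].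
  destruct (archimed (rdist d S p q / eta)) as [Ha _].
  assert (exists n, rdist d S p q < eta * 2 ^ n) as [n Hn].
  { destruct (Rle_or_lt 0 (IZR (up (rdist d S p q / eta)))) as [H0|H0].
    - exists (Z.to_nat (up (rdist d S p q / eta))).
      pose proof (pow2_big (Z.to_nat (up (rdist d S p q / eta)))).
      rewrite INR_IZR_INZ, Z2Nat.id in H by (apply le_IZR; lra).
      apply (Rmult_lt_reg_r (/ eta)); [apply Rinv_0_lt_compat; lra|].
      replace (eta * 2 ^ Z.to_nat (up (rdist d S p q / eta)) * / eta) with (2 ^ Z.to_nat (up (rdist d S p q / eta))) by (field; lra).
      unfold Rdiv in Ha. lra.
    - exfalso. pose proof (rdist_nonneg d S Hm p q).
      assert (0 <= rdist d S p q / eta) by (apply Rdiv_le_0_compat; lra). lra. }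
  eapply Ind; eauto.
Qed.
End K.
Definition clamp (t : R) := Rmax 0 (Rmin 1 t).
Lemma clamp_in t : 0 <= clamp t <= 1.
Proof. unfold clamp, Rmax, Rmin; repeat destruct Rle_dec; lra. Qed.
Lemma clamp_id t : 0 <= t <= 1 -> clamp t = t.
Proof. unfold clamp, Rmax, Rmin; repeat destruct Rle_dec; lra. Qed.
Lemma clamp_lip s t : Rabs (clamp s - clamp t) <= Rabs (s - t).
Proof. unfold clamp, Rmax, Rmin; repeat destruct Rle_dec; apply Rabs_le; split_Rabs; lra. Qed.

Section M.
Context {X : Type} (d : X -> X -> R) (Hm : is_metric d)
  (Hc : d_compact d) (Hl : length_space d).

Lemma approx_mid x y e : 0 < e -> exists m,
  Rabs (d x m - d x y / 2) + Rabs (d m y - d x y / 2) < e.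
Proof. intro He. destruct Hm as (H0 & H1 & Hs & Ht).
  destruct (Req_dec (d x y) 0) as [HD|HD].
  { exists x. rewrite (proj2 (H1 x x) eq_refl), HD.
    replace (0 - 0/2) with 0 by field. rewrite Rabs_R0. lra. }
  assert (HDp : 0 < d x y) by (pose proof (H0 x y); lra).
  destruct (Hl x y) as [Hlb Hglb].
  assert (exists g, is_path d g x y /\ Rbar_lt (curve_length d g) (d x y + e)) as [g [[Hg [Hg0 Hg1]] Hlen]].
  { apply NNPP; intro Hn. assert (Rbar_le (d x y + e) (d x y)).
    { apply Hglb. intros L [g [Hp ->]]. destruct (Rbar_le_lt_dec (d x y + e) (curve_length d g)); auto.
      exfalso; apply Hn; eauto. }
    simpl in H; lra. }
  set (f := fun t => d x (g (clamp t)) - d x y / 2).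
  assert (Hf : continuity f).
  { intros a eps Heps. destruct (Hg (clamp a) (clamp_in a) eps Heps) as [del [Hdel Hd]].
    exists del; split; auto. intros t [_ Ht']. simpl in *. unfold Rdist in *. unfold f.
    replace (d x (g (clamp t)) - d x y / 2 - (d x (g (clamp a)) - d x y / 2))
      with (d x (g (clamp t)) - d x (g (clamp a))) by ring.
    assert (A := Hd (clamp t) (clamp_in t) ltac:(pose proof (clamp_lip t a); lra)).
    pose proof (Ht x (g (clamp t)) (g (clamp a))). pose proof (Ht x (g (clamp a)) (g (clamp t))).
    rewrite (Hs (g (clamp a))) in H2. apply Rabs_def1; lra. }
  destruct (IVT f 0 1 Hf ltac:(lra)) as [t [Ht01 Hft]].
  { unfold f; rewrite clamp_id, Hg0, (proj2 (H1 x x) eq_refl) by lra. lra. }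
  { unfold f; rewrite clamp_id, Hg1 by lra. lra. }
  unfold f in Hft; rewrite clamp_id in Hft by lra.
  exists (g t).
  assert (Hp : is_partition (0 :: t :: 1 :: nil)).
  { split; [|split; reflexivity]. apply Sorted_cons; [apply Sorted_cons; [apply Sorted_cons; constructor|constructor; lra]|constructor; lra]. }
  destruct (Lub_Rbar_correct (fun s => exists l, is_partition l /\ s = poly_sum d g l)) as [Hub _].
  assert (A := Hub _ (ex_intro _ _ (conj Hp eq_refl))).
  unfold curve_length in Hlen. assert (B := Rbar_le_lt_trans _ _ _ A Hlen). simpl in B.
  rewrite Hg0, Hg1 in B. pose proof (Ht x (g t) y).
  replace (d x (g t) - d x y / 2) with 0 by lra. rewrite Rabs_R0.
  rewrite Rabs_right by lra. lra.
Qed.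

Lemma metric_mid x y : exists m, d x m = d x y / 2 /\ d m y = d x y / 2.
Proof.
  set (F := fun m => Rabs (d x m - d x y / 2) + Rabs (d m y - d x y / 2)).
  destruct (classic (exists m, F m = 0)) as [[m Hm0]|Hn].
  { exists m. unfold F in Hm0. pose proof (Rabs_pos (d x m - d x y / 2)).
    pose proof (Rabs_pos (d m y - d x y / 2)).
    assert (Rabs (d x m - d x y / 2) = 0) by lra. assert (Rabs (d m y - d x y / 2) = 0) by lra.
    apply Rabs_eq_0 in H1; apply Rabs_eq_0 in H2. lra. }
  exfalso.
  assert (Fpos : forall m, 0 < F m).
  { intro m. assert (F m <> 0) by (intro; apply Hn; eauto). unfold F in *.
    pose proof (Rabs_pos (d x m - d x y / 2)). pose proof (Rabs_pos (d m y - d x y / 2)). lra. }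
  assert (Flip : forall m m', F m - F m' <= 2 * d m m').
  { intros m m'. destruct Hm as (H0 & H1 & Hs & Ht). unfold F.
    pose proof (Ht x m m'); pose proof (Ht x m' m); pose proof (Ht m m' y); pose proof (Ht m' m y).
    rewrite (Hs m' m) in *. split_Rabs; lra. }
  set (U := fun (k : nat) m => / INR (S k) < F m).
  destruct (Hc nat U) as [l Hlc].
  - intros k m Hk. unfold U in *. exists ((F m - / INR (S k)) / 2). split; [lra|].
    intros y' Hy'. pose proof (Flip m y'). lra.
  - intro m. destruct (archimed (/ F m)) as [Ha _].
    pose proof (Fpos m).
    assert (0 <= IZR (up (/ F m))) by (pose proof (Rinv_0_lt_compat _ H); lra).
    exists (Z.to_nat (up (/ F m))). unfold U. rewrite S_INR, INR_IZR_INZ, Z2Nat.id by (apply le_IZR; lra).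
    pose proof (Rinv_0_lt_compat _ H).
    apply Rlt_le_trans with (/ / F m); [apply Rinv_lt_contravar; [apply Rmult_lt_0_compat; lra|lra]| rewrite Rinv_inv; lra].
  - set (K := fold_right Nat.max 0%nat l).
    assert (HK : forall k, In k l -> (k <= K)%nat).
    { unfold K; clear Hlc; induction l; simpl; [tauto|]. intros k [->|Hk]; [lia|].
      specialize (IHl k Hk); lia. }
    assert (HpK : 0 < INR (S K)) by (apply lt_0_INR; lia).
    destruct (approx_mid x y (/ INR (S K)) ltac:(apply Rinv_0_lt_compat; lra)) as [m Hm'].
    destruct (Hlc m) as [k [Hk Hu]]. unfold U in Hu. fold (F m) in Hm'.
    assert (/ INR (S K) <= / INR (S k)).
    { apply Rinv_le_contravar. apply lt_0_INR; lia. apply le_INR. specialize (HK k Hk); lia. }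
    lra.
Qed.
End M.

Lemma BLIE_FLIE {X : Type} (d : X -> X -> R) (S : X -> Prop) eps :
  is_metric d -> BLIE d S eps -> FLIE d S eps.
Proof. intros Hm [He HB]. split; auto. intros p q Hpq.
  pose proof (rdist_le_d d S Hm p q). symmetry; apply HB; lra. Qed.

Lemma BLIE_mid {X : Type} (d : X -> X -> R) (S : X -> Prop) eps :
  is_metric d -> d_compact d -> length_space d -> BLIE d S eps -> image_local_midpoint d S eps.
Proof. intros Hm Hc Hl [He HB] p q Hpq.
  assert (E := HB p q Hpq).
  destruct (metric_mid d Hm Hc Hl p q) as [m [H1 H2]].
  pose proof (rdist_nonneg d S Hm p q).
  destruct Hm as (H0 & Hid & Hs & Ht).
  exists m. rewrite <- E.
  assert (A : rdist d S m p <= d m p) by (apply rdist_le_d; split; auto).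
  assert (B : rdist d S m q <= d m q) by (apply rdist_le_d; split; auto).
  rewrite (Hs m p), H1 in A. rewrite H2 in B.
  split.
  - rewrite <- H1, (Hs p m). symmetry; apply HB. lra.
  - rewrite <- H2. symmetry; apply HB. lra.
Qed.

Theorem mainTheorem10 (X : Type) (d : X -> X -> R) (S : X -> Prop) (eps : R) :
  0 < eps -> is_metric d -> d_compact d -> length_space d ->
  d_closed d S -> R_embedding d S ->
  (BLIE d S eps <-> FLIE d S eps /\ image_local_midpoint d S eps) /\
  (FLIE d S eps /\ image_local_midpoint d S eps <->
     (exists eps0, 0 < eps0 < eps /\ FLIE d S eps0) /\ image_local_midpoint d S eps).
Proof. intros Heps Hm Hc Hl _ He. split; split.
  - intro HB. split; [apply BLIE_FLIE|apply BLIE_mid]; auto.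
  - intros [HF HM]. apply (keyK d S Hm Hc He eps eps); auto.
  - intros [[_ HF] HM]. split; auto. exists (eps/2). split; [lra|]. split; auto.
    intros p q H; apply HF; lra.
  - intros [[e0 [He0 HF]] HM]. split; auto. apply BLIE_FLIE; auto.
    apply (keyK d S Hm Hc He eps e0); auto. lra.
Qed.
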